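(* A point $z\in\mathbb{R}^{d\times(n+1)}$ belongs to $\bigcup_{H\in\mathcal{H}}\Delta_H$ if and only if there exists $\delta$ such that $(z,\delta)$ satisfies (Inc-1); i.e. (Inc-1) is an MILP formulation of $\{\Delta_H\}_{H\in\mathcal{H}}$. Moreover, with $F(z)=(F_1(z_1),\dots,F_d(z_d))$ for $z\in\Delta$, one has $F(\Delta_H)=H$ for each $H\in\mathcal{H}$.
   Context: Let $d,n$ be positive integers, $[k]=\{1,\dots,k\}$. Let $a\in\mathbb{R}^{d\times(n+1)}$ with $a_{i0}<\dots<a_{in}$ for each $i$. For each $i$ let $l_i\ge1$ and $0=\tau(i,0)<\tau(i,1)<\dots<\tau(i,l_i)=n$ be integers. $\mathcal{H}=\{\prod_{i=1}^d[a_{i\tau(i,t_i-1)},a_{i\tau(i,t_i)}]\mid t_i\in[l_i]\}$. $\Delta_i=\{z_i\in\mathbb{R}^{n+1}\mid1=z_{i0}\ge z_{i1}\ge\dots\ge z_{in}\ge0\}$, $\Delta=\prod_i\Delta_i$. For $H=\prod_i[a_{i\tau(i,t_i-1)},a_{i\tau(i,t_i)}]$, $\Delta_H=\{z\in\Delta\mid z_{ij}=1\text{ for }j\le\tau(i,t_i-1),\ z_{ij}=0\text{ for }j>\tau(i,t_i),\ \forall i\}$. (Inc-1) in $(z,\delta)$, $\delta=(\delta_{it})_{i\in[d],t\in[l_i-1]}$: $z_i\in\Delta_i$, $\delta_{it}\in\{0,1\}$, $z_{i\tau(i,t)}\ge\delta_{it}\ge z_{i\tau(i,t)+1}$. $F_i(z_i)=a_{i0}z_{i0}+\sum_{j=1}^n(a_{ij}-a_{i,j-1})z_{ij}$.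 *)

(* Defs.v *)
From mathcomp Require Import all_boot all_order all_algebra.
Set Implicit Arguments. Unset Strict Implicit. Unset Printing Implicit Defensive.
Import Order.TTheory GRing.Theory Num.Theory.
Local Open Scope ring_scope.

Section Defs.
Variables (R : realFieldType) (d n : nat).

(* entry (i, j) of a d x (n+1) matrix, with j : nat (meaningful for j <= n) *)
Definition mxat (A : 'M[R]_(d, n.+1)) (i : 'I_d) (j : nat) : R := A i (inord j).

Definition inDelta_i (z : 'M[R]_(d, n.+1)) (i : 'I_d) : Prop :=
  mxat z i 0 = 1 /\
  (forall j : nat, (j < n)%N -> mxat z i j.+1 <= mxat z i j) /\
  0 <= mxat z i n.

Definition inDelta (z : 'M[R]_(d, n.+1)) : Prop := forall i, inDelta_i z i.

(* t = (t_i)_i with t_i in [l_i] indexes the box H in \mathcal{H} *)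
Definition valid_t (l : 'I_d -> nat) (t : 'I_d -> nat) : Prop :=
  forall i, (1 <= t i <= l i)%N.

Definition inDeltaH (tau : 'I_d -> nat -> nat) (t : 'I_d -> nat)
    (z : 'M[R]_(d, n.+1)) : Prop :=
  inDelta z /\
  forall i (j : nat), (j <= n)%N ->
    ((j <= tau i (t i).-1)%N -> mxat z i j = 1) /\
    ((tau i (t i) < j)%N -> mxat z i j = 0).

Definition Inc1 (l : 'I_d -> nat) (tau : 'I_d -> nat -> nat)
    (z : 'M[R]_(d, n.+1)) (delta : 'I_d -> nat -> bool) : Prop :=
  inDelta z /\
  forall i (t : nat), (1 <= t)%N -> (t < l i)%N ->
    (delta i t)%:R <= mxat z i (tau i t) /\
    mxat z i (tau i t).+1 <= (delta i t)%:R.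

Definition inH (a : 'M[R]_(d, n.+1)) (tau : 'I_d -> nat -> nat)
    (t : 'I_d -> nat) (x : 'rV[R]_d) : Prop :=
  forall i, mxat a i (tau i (t i).-1) <= x ord0 i <= mxat a i (tau i (t i)).

Definition Fi (a z : 'M[R]_(d, n.+1)) (i : 'I_d) : R :=
  mxat a i 0 * mxat z i 0 +
  \sum_(1 <= j < n.+1) (mxat a i j - mxat a i j.-1) * mxat z i j.

Definition F (a z : 'M[R]_(d, n.+1)) : 'rV[R]_d := \row_i Fi a z i.

End Defs.

(* Main.v *)
Require Import Defs.
From mathcomp Require Import all_boot all_order all_algebra.
From mathcomp Require Import zify ring.
Set Implicit Arguments. Unset Strict Implicit.
Import Order.TTheory GRing.Theory Num.Theory.
Local Open Scope ring_scope.
From mathcomp Require Import lra.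

Lemma mono_Z (R : realFieldType) (Z : nat -> R) N :
  (forall j, (j < N)%N -> Z j.+1 <= Z j) ->
  forall j k, (j <= k)%N -> (k <= N)%N -> Z k <= Z j.
Proof.
move=> hZ j k; elim: k => [|k IH] hjk hk.
  by have -> : j = 0%N by lia.
have [->|hne] := eqVneq j k.+1; first by [].
apply: le_trans (hZ k hk) (IH _ _); lia.
Qed.

Lemma tel (R : realFieldType) (A : nat -> R) p :
  \sum_(1 <= j < p.+1) (A j - A j.-1) = A p - A 0%N.
Proof.
elim: p => [|p IH]; first by rewrite big_geq // subrr.
by rewrite big_nat_recr //= IH addrC addrA subrK.
Qed.

Lemma tel2 (R : realFieldType) (A : nat -> R) p q : (p <= q)%N ->
  \sum_(p.+1 <= j < q.+1) (A j - A j.-1) = A q - A p.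
Proof.
move=> hpq; have := tel A q.
rewrite (@big_cat_nat _ _ _ p.+1) //= tel => h.
by apply: (addrI (A p - A 0%N)); rewrite h; ring.
Qed.

Lemma key (R : realFieldType) (A Z : nat -> R) N p q :
  (p <= q)%N -> (q <= N)%N -> Z 0%N = 1 ->
  (forall j, (j <= p)%N -> Z j = 1) ->
  (forall j, (q < j)%N -> (j <= N)%N -> Z j = 0) ->
  A 0%N * Z 0%N + \sum_(1 <= j < N.+1) (A j - A j.-1) * Z j =
  A p + \sum_(p.+1 <= j < q.+1) (A j - A j.-1) * Z j.
Proof.
move=> hpq hqN hZ0 h1 h0.
rewrite (@big_cat_nat _ _ _ q.+1) //= (@big_cat_nat _ _ _ p.+1) //=.
have -> : \sum_(q.+1 <= j < N.+1) (A j - A j.-1) * Z j = 0.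
  rewrite big_nat_cond big1 // => j /andP[/andP[j1 j2] _]; rewrite h0 ?mulr0 //; lia.
rewrite addr0.
rewrite (@eq_big_nat _ _ _ 1 p.+1 _ (fun j => A j - A j.-1)); last first.
  by move=> j /andP[_ hj]; rewrite h1 ?mulr1.
rewrite tel hZ0 mulr1; ring.
Qed.
Unset Implicit Arguments.

Theorem lemma3p1 (R : realFieldType) (d n : nat)
  (hd : (0 < d)%N) (hn : (0 < n)%N)
  (a : 'M[R]_(d, n.+1))
  (ha : forall (i : 'I_d) (j : nat), (j < n)%N -> mxat a i j < mxat a i j.+1)
  (l : 'I_d -> nat) (tau : 'I_d -> nat -> nat)
  (hl : forall i, (1 <= l i)%N)
  (htau0 : forall i, tau i 0%N = 0%N)
  (htauS : forall i (t : nat), (t < l i)%N -> (tau i t < tau i t.+1)%N)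
  (htaul : forall i, tau i (l i) = n) :
  (forall z : 'M[R]_(d, n.+1),
     (exists t : 'I_d -> nat, valid_t l t /\ inDeltaH tau t z) <->
     (exists delta : 'I_d -> nat -> bool, Inc1 l tau z delta)) /\
  (forall t : 'I_d -> nat, valid_t l t ->
     forall x : 'rV[R]_d,
       (exists z : 'M[R]_(d, n.+1), inDeltaH tau t z /\ F a z = x) <->
       inH a tau t x).
Proof.
have tau_lt : forall i s s', (s < s')%N -> (s' <= l i)%N -> (tau i s < tau i s')%N.
  move=> i s s'; elim: s' => [|s' IH] // hss' hs'.
  have [->|hne] := eqVneq s s'; first by apply: htauS.
  apply: ltn_trans (IH _ _) (htauS _ _ _); lia.
have tau_le : forall i s s', (s <= s')%N -> (s' <= l i)%N -> (tau i s <= tau i s')%N.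
  move=> i s s' h1 h2; have [->|hne] := eqVneq s s'; first by [].
  apply: ltnW; apply: tau_lt => //; lia.
have tau_n : forall i s, (s <= l i)%N -> (tau i s <= n)%N.
  by move=> i s hs; rewrite -(htaul i); apply: tau_le.
have dbounds : forall (z : 'M[R]_(d, n.+1)) (i : 'I_d), inDelta_i z i -> forall j, (j <= n)%N ->
    0 <= mxat z i j <= 1 /\ forall k, (j <= k)%N -> (k <= n)%N -> mxat z i k <= mxat z i j.
  move=> z i hzi j hj; case: hzi => h0 [hm hn'].
  have M := mono_Z hm.
  split; last by move=> k; apply: M.
  rewrite -h0 (M 0%N j) // andbT; apply: le_trans hn' _; exact: M.
split.
  move=> z; split.
    move=> [t [ht [hz hH]]].
    exists (fun i s => (s < t i)%N); split => // i s hs1 hsl.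
    have [hsn1 hsn] : (tau i s < n)%N /\ (tau i s <= n)%N.
      have := tau_lt i s (l i) hsl (leqnn _); rewrite htaul; lia.
    have [B1 _] := dbounds z i (hz i) _ hsn.
    have [B2 _] := dbounds z i (hz i) _ hsn1.
    case: ltnP => hst /=.
      rewrite (proj1 (hH i _ hsn)) ?lexx; last by have /andP[? ?] := ht i; apply: tau_le; lia.
      by case/andP: B2.
    rewrite (proj2 (hH i _ hsn1)) ?lexx; last by have := tau_le i _ _ hst (ltnW hsl); lia.
    by case/andP: B1.
  move=> [delta [hz hI]].
  pose P i := fun s => ~~ delta i s.
  pose t i := (find (P i) (iota 1 (l i).-1)).+1.
  have fs : forall i, (find (P i) (iota 1 (l i).-1) <= (l i).-1)%N.
    by move=> i; rewrite -{2}(size_iota 1 (l i).-1) find_size.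
  exists t; split.
    by move=> i; rewrite /t; have := fs i; have := hl i; lia.
  split => // i j hj; split => hjt.
    have [B _] := dbounds z i (hz i) _ hj.
    apply/le_anti; rewrite (andP B).2 /=.
    case ht1: (t i) => [|k] //; rewrite ht1 /= in hjt.
    case: k ht1 hjt => [|k] ht1 hjt.
      rewrite htau0 in hjt; have -> : j = 0%N by lia.
      by have [-> _] := hz i.
    have hk : (k < find (P i) (iota 1 (l i).-1))%N by rewrite /t in ht1; lia.
    have := before_find 0%N hk; rewrite nth_iota; last by have := fs i; lia.
    rewrite /P add1n => /negbFE hd'.
    have hkl : (k.+1 < l i)%N by have := fs i; have := hl i; lia.
    have [h1 _] := hI i k.+1 isT hkl; rewrite hd' in h1.
    apply: le_trans h1 _; have [_ M] := dbounds z i (hz i) _ hj.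
    by apply: M; [exact: hjt | exact: tau_n i _ (ltnW hkl)].
  have [B M] := dbounds z i (hz i) _ hj.
  apply/le_anti; rewrite (andP B).1 andbT.
  case hh: (has (P i) (iota 1 (l i).-1)); last first.
    move: hh; rewrite has_find size_iota => hh.
    have : t i = l i by rewrite /t; have := fs i; have := hl i; lia.
    by move=> e; rewrite e htaul in hjt; lia.
  have := nth_find 0%N hh; rewrite nth_iota; last by move: hh; rewrite has_find size_iota.
  rewrite /P add1n -/(t i) => hd'.
  have htl : (t i < l i)%N by move: hh; rewrite has_find size_iota /t; have := hl i; lia.
  have [_ h2] := hI i (t i) isT htl; rewrite (negbTE hd') in h2.
  have hn2 : ((tau i (t i)).+1 <= n)%N by have := tau_lt i _ _ htl (leqnn _); rewrite htaul.
  apply: le_trans h2; have [_ M2] := dbounds z i (hz i) _ hn2; exact: M2.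
move=> t ht x.
have tb : forall i, (1 <= t i <= l i)%N by exact: ht.
have hpq : forall i, (tau i (t i).-1 < tau i (t i))%N.
  move=> i; have /andP[h1 h2] := tb i; apply: tau_lt => //; lia.
have hqn : forall i, (tau i (t i) <= n)%N.
  move=> i; have /andP[h1 h2] := tb i; exact: tau_n.
have dpos : forall i j, (1 <= j)%N -> (j <= n)%N -> 0 < mxat a i j - mxat a i j.-1.
  move=> i j h1 h2; rewrite subr_gt0; have := ha i j.-1; rewrite prednK //; apply; lia.
have telA : forall i, \sum_((tau i (t i).-1).+1 <= j < (tau i (t i)).+1)
     (mxat a i j - mxat a i j.-1) = mxat a i (tau i (t i)) - mxat a i (tau i (t i).-1).
  by move=> i; apply: tel2; apply: ltnW.
split.
  move=> [z [[hz hH] <-]] i; rewrite mxE /Fi.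
  rewrite (key _ (ltnW (hpq i)) (hqn i) (proj1 (hz i))); first last.
  - by move=> j hj1 hj2; apply: (proj2 (hH i j hj2)).
  - move=> j hj; apply: (proj1 (hH i j _)) => //; have := hpq i; have := hqn i; lia.
  apply/andP; split.
    rewrite lerDl big_nat_cond; apply: sumr_ge0 => j /andP[/andP[j1 j2] _].
    have hjn : (j <= n)%N by have := hqn i; lia.
    have [B _] := dbounds z i (hz i) _ hjn.
    apply: mulr_ge0; [apply: ltW; apply: dpos => //; lia | by case/andP: B].
  rewrite -lerBrDl -telA; apply: ler_sum_nat => j /andP[j1 j2].
  have hjn : (j <= n)%N by have := hqn i; lia.
  have [B _] := dbounds z i (hz i) _ hjn.
  rewrite -[X in _ <= X]mulr1; apply: ler_wpM2l; [apply: ltW; apply: dpos => //; lia | by case/andP: B].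
move=> hx.
pose D i := mxat a i (tau i (t i)) - mxat a i (tau i (t i).-1).
have Amono : forall i j k, (j < k)%N -> (k <= n)%N -> mxat a i j < mxat a i k.
  move=> i j k; elim: k => [|k IH] // hjk hk.
  have [->|hne] := eqVneq j k; first by apply: ha.
  apply: lt_trans (IH _ _) (ha _ _ _); lia.
have Dpos : forall i, 0 < D i.
  by move=> i; rewrite /D subr_gt0; apply: Amono.
pose lam i := (x ord0 i - mxat a i (tau i (t i).-1)) / D i.
have lam01 : forall i, 0 <= lam i <= 1.
  move=> i; have /andP[h1 h2] := hx i; have hD := Dpos i.
  rewrite /lam; apply/andP; split; first by apply: divr_ge0; [rewrite subr_ge0 | apply: ltW].
  rewrite ler_pdivrMr // mul1r; move: hD; rewrite /D; lra.
pose z := \matrix_(i < d, j < n.+1) (if (j <= tau i (t i).-1)%N then 1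
   else if (j <= tau i (t i))%N then lam i else 0 : R).
have zE : forall i j, (j <= n)%N -> mxat z i j = if (j <= tau i (t i).-1)%N then 1
   else if (j <= tau i (t i))%N then lam i else 0.
  by move=> i0 j0 hj0; rewrite /mxat mxE inordK.
exists z; split.
  split.
    move=> i; have /andP[l0 l1] := lam01 i; split; first by rewrite zE.
    split.
      move=> j hj; rewrite !zE //; last lia.
      case: (leqP j.+1 (tau i (t i).-1)) => h1.
        by have -> : (j <= tau i (t i).-1)%N = true by lia.
      case: (leqP j (tau i (t i).-1)) => h2.
        by case: ifP => _ //; rewrite ler01.
      case: (leqP j.+1 (tau i (t i))) => h3.
        by have -> : (j <= tau i (t i))%N = true by lia.
      by case: ifP.
    rewrite zE //; case: ifP => _; first by rewrite ler01.
    by case: ifP.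
  move=> i j hj; rewrite zE //; split=> h; first by rewrite h.
  have := hpq i => hh.
  have -> : (j <= tau i (t i).-1)%N = false by lia.
  by have -> : (j <= tau i (t i))%N = false by lia.
apply/rowP => i; rewrite mxE /Fi.
rewrite (key _ (ltnW (hpq i)) (hqn i)); first last.
- move=> j hj1 hj2; have := hpq i => hh; rewrite zE // ifF; [rewrite ifF //; lia | lia].
- by move=> j hj; rewrite zE ?ifT //; have := hpq i; have := hqn i; lia.
- by rewrite zE.
rewrite (@eq_big_nat _ _ _ _ _ _ (fun j => (mxat a i j - mxat a i j.-1) * lam i)); last first.
  move=> j /andP[j1 j2]; rewrite zE; last by have := hqn i; lia.
  by rewrite ifF ?ifT //; lia.
rewrite -mulr_suml telA -/(D i) /lam mulrC divfK ?gt_eqF // addrC subrK; congr (x _ _); exact: val_inj.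
Qed.
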